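(* Let $\phi$ be a smooth function on an open subset of the $x$-$y$ plane such that $X(x,y)=(x,y,\phi(x,y))$ is a timelike minimal surface in $\mathbb{L}^3$ without singularities. Then, locally (near each point), $X$ can be written as a graph of the form $(x,\psi(x,z),z)$ or of the form $(\psi(y,z),y,z)$, where $\psi$ is a Born-Infeld soliton (in the variables $(x,z)$, respectively $(y,z)$).
   Context: $\mathbb{L}^3$ denotes $\mathbb{R}^3$ with the Lorentzian metric $ds^2=dx^2+dy^2-dz^2$. A surface is timelike if its induced metric is Lorentzian (equivalently, its unit normal is spacelike), and minimal if its mean curvature vanishes; ''without singularities'' means the map is an immersion whose induced metric is nondegenerate (timelike) everywhere. A function $\psi$ defined on an open set $\Omega$ of the $(u,v)$-plane is a Born-Infeld soliton (in the variables $u,v$) if it satisfies the Born-Infeld equation $(1-\psi_v^2)\psi_{uu}+2\psi_u\psi_v\psi_{uv}-(1+\psi_u^2)\psi_{vv}=0$. *)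

(* Defs.v *)
From Stdlib Require Import Reals List.
From Coquelicot Require Import Coquelicot.
Open Scope R_scope.

Definition open2 (D : R -> R -> Prop) : Prop :=
  open (fun p : R * R => D (fst p) (snd p)).

Definition pd1 (f : R -> R -> R) (u v : R) : R := Derive (fun t => f t v) u.
Definition pd2 (f : R -> R -> R) (u v : R) : R := Derive (fun t => f u t) v.

Inductive dir := D1 | D2.

Fixpoint iter_pd (ds : list dir) (f : R -> R -> R) : R -> R -> R :=
  match ds with
  | nil => f
  | D1 :: ds' => pd1 (iter_pd ds' f)
  | D2 :: ds' => pd2 (iter_pd ds' f)
  end.

Definition smooth_on (D : R -> R -> Prop) (f : R -> R -> R) : Prop :=
  forall (ds : list dir) (u v : R), D u v ->
    let g := iter_pd ds f in
    ex_derive (fun t => g t v) u /\ ex_derive (fun t => g u t) v /\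
    continuous (fun p : R * R => g (fst p) (snd p)) (u, v).

Definition vec3 := (R * R * R)%type.
Definition v1 (a : vec3) : R := fst (fst a).
Definition v2 (a : vec3) : R := snd (fst a).
Definition v3 (a : vec3) : R := snd a.

Definition ldot (a b : vec3) : R := v1 a * v1 b + v2 a * v2 b - v3 a * v3 b.

(** Lorentzian cross product: ldot (lcross a b) a = ldot (lcross a b) b = 0 *)
Definition lcross (a b : vec3) : vec3 :=
  (v2 a * v3 b - v3 a * v2 b,
   v3 a * v1 b - v1 a * v3 b,
   - (v1 a * v2 b - v2 a * v1 b)).

Definition vscale (c : R) (a : vec3) : vec3 := (c * v1 a, c * v2 a, c * v3 a).

Definition surface := R -> R -> vec3.

Definition Xu (X : surface) (u v : R) : vec3 :=
  (pd1 (fun a b => v1 (X a b)) u v, pd1 (fun a b => v2 (X a b)) u v,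
   pd1 (fun a b => v3 (X a b)) u v).
Definition Xv (X : surface) (u v : R) : vec3 :=
  (pd2 (fun a b => v1 (X a b)) u v, pd2 (fun a b => v2 (X a b)) u v,
   pd2 (fun a b => v3 (X a b)) u v).
Definition Xuu (X : surface) := Xu (Xu X).
Definition Xuv (X : surface) := Xv (Xu X).
Definition Xvv (X : surface) := Xv (Xv X).

Definition fE (X : surface) u v := ldot (Xu X u v) (Xu X u v).
Definition fF (X : surface) u v := ldot (Xu X u v) (Xv X u v).
Definition fG (X : surface) u v := ldot (Xv X u v) (Xv X u v).

(** [X] is an immersion on [D] whose induced metric is Lorentzian
    (timelike surface without singularities). *)
Definition timelike_surface (D : R -> R -> Prop) (X : surface) : Prop :=
  forall u v, D u v ->
    lcross (Xu X u v) (Xv X u v) <> (0, 0, 0) /\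
    fE X u v * fG X u v - fF X u v ^ 2 < 0.

Definition unit_normal (X : surface) (u v : R) : vec3 :=
  let n := lcross (Xu X u v) (Xv X u v) in
  vscale (/ sqrt (Rabs (ldot n n))) n.

Definition sL (X : surface) u v := ldot (Xuu X u v) (unit_normal X u v).
Definition sM (X : surface) u v := ldot (Xuv X u v) (unit_normal X u v).
Definition sN (X : surface) u v := ldot (Xvv X u v) (unit_normal X u v).

Definition mean_curvature (X : surface) (u v : R) : R :=
  (fE X u v * sN X u v - 2 * fF X u v * sM X u v + fG X u v * sL X u v)
  / (2 * (fE X u v * fG X u v - fF X u v ^ 2)).

Definition minimal_surface (D : R -> R -> Prop) (X : surface) : Prop :=
  forall u v, D u v -> mean_curvature X u v = 0.

Definition graph_z (phi : R -> R -> R) : surface := fun x y => (x, y, phi x y).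

Definition born_infeld (D : R -> R -> Prop) (psi : R -> R -> R) : Prop :=
  forall u v, D u v ->
    (1 - pd2 psi u v ^ 2) * pd1 (pd1 psi) u v
    + 2 * pd1 psi u v * pd2 psi u v * pd2 (pd1 psi) u v
    - (1 + pd1 psi u v ^ 2) * pd2 (pd2 psi) u v = 0.

(* Main.v *)
Require Import Defs.
From Stdlib Require Import Reals Lra Psatz List ClassicalEpsilon FunctionalExtensionality.
From Coquelicot Require Import Coquelicot.
Open Scope R_scope.

Definition base (f : R -> R -> R) (u v : R) : Prop :=
  ex_derive (fun t => f t v) u /\ ex_derive (fun t => f u t) v /\
  continuous (fun p : R * R => f (fst p) (snd p)) (u, v).

Lemma open2_loc D : open2 D <-> forall x y, D x y -> locally_2d D x y.
Proof.
  unfold open2, open; split.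
  - intros H x y Hxy. apply locally_2d_locally. exact (H (x,y) Hxy).
  - intros H [x y] Hxy. apply locally_2d_locally. exact (H x y Hxy).
Qed.

Lemma open2_loc1 D x y : open2 D -> D x y -> locally x (fun t => D t y).
Proof. intros HD H. apply locally_2d_1d_const_y. now apply open2_loc. Qed.
Lemma open2_loc2 D x y : open2 D -> D x y -> locally y (fun t => D x t).
Proof. intros HD H. apply locally_2d_1d_const_x. now apply open2_loc. Qed.
Lemma open2_locp D x y : open2 D -> D x y ->
  locally (x, y) (fun p : R * R => D (fst p) (snd p)).
Proof. intros HD H. exact (HD (x,y) H). Qed.

Lemma iter_pd_ext D f g : open2 D -> (forall x y, D x y -> f x y = g x y) ->
  forall ds x y, D x y -> iter_pd ds f x y = iter_pd ds g x y.
Proof.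
  intros HD Hfg ds; induction ds as [|d ds IH]; intros x y Hxy; simpl; auto.
  destruct d; unfold pd1, pd2; apply Derive_ext_loc.
  - generalize (open2_loc1 D x y HD Hxy); apply filter_imp; intros t Ht; auto.
  - generalize (open2_loc2 D x y HD Hxy); apply filter_imp; intros t Ht; auto.
Qed.

Lemma base_ext D f g u v : open2 D -> (forall x y, D x y -> f x y = g x y) ->
  D u v -> base f u v -> base g u v.
Proof.
  intros HD Hfg Huv [H1 [H2 H3]]; split; [|split].
  - apply ex_derive_ext_loc with (2 := H1).
    generalize (open2_loc1 D u v HD Huv); apply filter_imp; intros t Ht; auto.
  - apply ex_derive_ext_loc with (2 := H2).
    generalize (open2_loc2 D u v HD Huv); apply filter_imp; intros t Ht; auto.
  - apply continuous_ext_loc with (2 := H3).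
    generalize (open2_locp D u v HD Huv); apply filter_imp; intros t Ht; auto.
Qed.

Lemma smooth_base D f : smooth_on D f <-> forall ds u v, D u v -> base (iter_pd ds f) u v.
Proof. unfold smooth_on, base; split; intros H ds u v Huv; apply (H ds u v Huv). Qed.

Lemma smooth_ext D f g : open2 D -> smooth_on D f ->
  (forall x y, D x y -> f x y = g x y) -> smooth_on D g.
Proof.
  intros HD Hf Hfg. apply smooth_base. intros ds u v Huv.
  apply base_ext with D (iter_pd ds f).
  - exact HD.
  - intros x y Hxy; apply iter_pd_ext with D; [exact HD|exact Hfg|exact Hxy].
  - exact Huv.
  - exact (proj1 (smooth_base D f) Hf ds u v Huv).
Qed.

Lemma smooth_class D (C : (R -> R -> R) -> Prop) :
  (forall f, C f -> forall u v, D u v -> base f u v) ->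
  (forall f, C f -> C (pd1 f)) -> (forall f, C f -> C (pd2 f)) ->
  forall f, C f -> smooth_on D f.
Proof.
  intros Hb H1 H2 f Hf. apply smooth_base. intros ds.
  assert (C (iter_pd ds f)).
  { induction ds as [|d ds IH]; simpl; auto. destruct d; auto. }
  intros; apply Hb; auto.
Qed.

Lemma iter_app1 ds f : iter_pd (ds ++ D1 :: nil) f = iter_pd ds (pd1 f).
Proof. induction ds as [|d ds IH]; simpl; auto. destruct d; rewrite IH; auto. Qed.
Lemma iter_app2 ds f : iter_pd (ds ++ D2 :: nil) f = iter_pd ds (pd2 f).
Proof. induction ds as [|d ds IH]; simpl; auto. destruct d; rewrite IH; auto. Qed.

Lemma smooth_pd1 D f : smooth_on D f -> smooth_on D (pd1 f).
Proof. intros H ds u v Huv. rewrite <- iter_app1. apply H; auto. Qed.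
Lemma smooth_pd2 D f : smooth_on D f -> smooth_on D (pd2 f).
Proof. intros H ds u v Huv. rewrite <- iter_app2. apply H; auto. Qed.

Lemma smooth_base0 D f u v : smooth_on D f -> D u v -> base f u v.
Proof. intros H Huv. exact (H nil u v Huv). Qed.

Lemma cont_2d f u v : continuous (fun p : R * R => f (fst p) (snd p)) (u, v) <-> continuity_2d_pt f u v.
Proof. rewrite continuity_2d_pt_filterlim. unfold continuous. simpl. tauto. Qed.

Lemma smooth_diff_n D f : smooth_on D f -> forall n u v, D u v -> ex_diff_n f n u v.
Proof.
  intros Hf n; revert f Hf; induction n as [|n IH]; intros f Hf u v Huv.
  - simpl; split; auto. apply cont_2d. apply (smooth_base0 D f u v Hf Huv).
  - destruct (smooth_base0 D f u v Hf Huv) as [A [B C]].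
    simpl; split; [now apply cont_2d|]. split; [exact A|]. split; [exact B|].
    split.
    + apply (IH (pd1 f)); auto. now apply smooth_pd1.
    + apply (IH (pd2 f)); auto. now apply smooth_pd2.
Qed.

Lemma DL_pol1 f x y dx dy : DL_pol 1 f x y dx dy = f x y + dx * pd1 f x y + dy * pd2 f x y.
Proof.
  unfold DL_pol, differential, pd1, pd2. simpl. unfold Binomial.C. simpl.
  unfold partial_derive. simpl. field.
Qed.

Lemma smooth_diff D f x y : open2 D -> smooth_on D f -> D x y ->
  differentiable_pt_lim f x y (pd1 f x y) (pd2 f x y).
Proof.
  intros HD Hf Hxy.
  assert (H : DL_regular_n f 1 x y).
  { apply Taylor_Lagrange_2d.
    generalize (proj1 (open2_loc D) HD x y Hxy). unfold locally_2d.
    intros [d Hd]; exists d; intros u v Hu Hv.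
    apply smooth_diff_n with D; auto. }
  destruct H as [K [d Hd]].
  intros eps.
  assert (HK : 0 < eps / (Rabs K + 1)).
  { apply Rdiv_lt_0_compat; [apply cond_pos|]. generalize (Rabs_pos K); lra. }
  exists (mkposreal _ (Rmin_pos _ _ (cond_pos d) HK)). simpl.
  intros u v Hu Hv.
  specialize (Hd u v (Rlt_le_trans _ _ _ Hu (Rmin_l _ _)) (Rlt_le_trans _ _ _ Hv (Rmin_l _ _))).
  rewrite DL_pol1 in Hd.
  set (m := Rmax (Rabs (u - x)) (Rabs (v - y))) in *.
  assert (Hm : m < eps / (Rabs K + 1)).
  { unfold m; apply Rmax_lub_lt; eapply Rlt_le_trans; eauto; apply Rmin_r. }
  assert (Hm0 : 0 <= m).
  { unfold m. eapply Rle_trans; [apply Rabs_pos|apply Rmax_l]. }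
  replace (f u v - f x y - (pd1 f x y * (u - x) + pd2 f x y * (v - y)))
    with (f u v - (f x y + (u - x) * pd1 f x y + (v - y) * pd2 f x y)) by ring.
  eapply Rle_trans; [exact Hd|].
  assert (K * m ^ 2 <= Rabs K * m * m).
  { simpl. rewrite Rmult_1_r, <- Rmult_assoc. apply Rmult_le_compat_r; auto.
    apply Rmult_le_compat_r; auto. apply Rle_abs. }
  assert (Rabs K * m <= eps).
  { assert (m * (Rabs K + 1) < eps).
    { apply Rlt_div_r in Hm; auto. generalize (Rabs_pos K); lra. }
    generalize (Rabs_pos K); nra. }
  eapply Rle_trans; [exact H|]. apply Rmult_le_compat_r; auto.
Qed.

Lemma base_iff f u v : base f u v <->
  ex_derive (fun t => f t v) u /\ ex_derive (fun t => f u t) v /\ continuity_2d_pt f u v.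
Proof. unfold base. rewrite cont_2d. tauto. Qed.

Inductive Alg (U : R -> R -> Prop) : (R -> R -> R) -> Prop :=
| A_sm f : smooth_on U f -> Alg U f
| A_plus f g : Alg U f -> Alg U g -> Alg U (fun a b => f a b + g a b)
| A_mult f g : Alg U f -> Alg U g -> Alg U (fun a b => f a b * g a b)
| A_opp f : Alg U f -> Alg U (fun a b => - f a b)
| A_inv f : Alg U f -> (forall a b, U a b -> f a b <> 0) -> Alg U (fun a b => / f a b)
| A_ext f g : Alg U f -> (forall a b, U a b -> f a b = g a b) -> Alg U g.

Lemma Alg_base U : open2 U -> forall f, Alg U f -> forall u v, U u v -> base f u v.
Proof.
  intros HU f Hf; induction Hf as [f Hf|f g _ IHf _ IHg|f g _ IHf _ IHg|f _ IHf|f _ IHf Hnz|f g _ IHf Hfg];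
    intros u v Huv.
  - now apply smooth_base0 with U.
  - specialize (IHf u v Huv); specialize (IHg u v Huv).
    rewrite base_iff in *. destruct IHf as [A [B C]]; destruct IHg as [A' [B' C']].
    split; [|split].
    + apply (ex_derive_plus (fun t => f t v) (fun t => g t v)); auto.
    + apply (ex_derive_plus (fun t => f u t) (fun t => g u t)); auto.
    + now apply continuity_2d_pt_plus.
  - specialize (IHf u v Huv); specialize (IHg u v Huv).
    rewrite base_iff in *. destruct IHf as [A [B C]]; destruct IHg as [A' [B' C']].
    split; [|split].
    + apply (ex_derive_mult (fun t => f t v) (fun t => g t v)); auto.
    + apply (ex_derive_mult (fun t => f u t) (fun t => g u t)); auto.
    + now apply continuity_2d_pt_mult.
  - specialize (IHf u v Huv).
    rewrite base_iff in *. destruct IHf as [A [B C]].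
    split; [|split].
    + apply (ex_derive_opp (fun t => f t v)); auto.
    + apply (ex_derive_opp (fun t => f u t)); auto.
    + now apply continuity_2d_pt_opp.
  - specialize (IHf u v Huv). specialize (Hnz u v Huv).
    rewrite base_iff in *. destruct IHf as [A [B C]].
    split; [|split].
    + apply (ex_derive_inv (fun t => f t v)); auto.
    + apply (ex_derive_inv (fun t => f u t)); auto.
    + now apply continuity_2d_pt_inv.
  - apply base_ext with U f; auto.
Qed.

Lemma Alg_pd1 U : open2 U -> forall f, Alg U f -> Alg U (pd1 f).
Proof.
  intros HU f Hf; induction Hf as [f Hf|f g Hf IHf Hg IHg|f g Hf IHf Hg IHg|f Hf IHf|f Hf IHf Hnz|f g Hf IHf Hfg].
  - apply A_sm. now apply smooth_pd1.
  - apply A_ext with (1 := A_plus _ _ _ IHf IHg).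
    intros a b Hab. unfold pd1.
    destruct (Alg_base U HU f Hf a b Hab) as [A _].
    destruct (Alg_base U HU g Hg a b Hab) as [A' _].
    symmetry; apply (Derive_plus (fun t => f t b) (fun t => g t b)); auto.
  - apply A_ext with (1 := A_plus _ _ _ (A_mult _ _ _ IHf Hg) (A_mult _ _ _ Hf IHg)).
    intros a b Hab. unfold pd1.
    destruct (Alg_base U HU f Hf a b Hab) as [A _].
    destruct (Alg_base U HU g Hg a b Hab) as [A' _].
    symmetry; apply (Derive_mult (fun t => f t b) (fun t => g t b)); auto.
  - apply A_ext with (1 := A_opp _ _ IHf).
    intros a b Hab. unfold pd1. symmetry; apply (Derive_opp (fun t => f t b)).
  - apply A_ext with (1 := A_opp _ _ (A_mult _ _ _ (A_mult _ _ _ IHf (A_inv _ _ Hf Hnz)) (A_inv _ _ Hf Hnz))).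
    intros a b Hab. unfold pd1.
    destruct (Alg_base U HU f Hf a b Hab) as [A _].
    rewrite (Derive_inv (fun t => f t b)); auto. specialize (Hnz a b Hab). field; auto.
  - apply A_ext with (1 := IHf). intros a b Hab.
    apply (iter_pd_ext U f g HU Hfg (D1 :: nil)); auto.
Qed.

Lemma Alg_pd2 U : open2 U -> forall f, Alg U f -> Alg U (pd2 f).
Proof.
  intros HU f Hf; induction Hf as [f Hf|f g Hf IHf Hg IHg|f g Hf IHf Hg IHg|f Hf IHf|f Hf IHf Hnz|f g Hf IHf Hfg].
  - apply A_sm. now apply smooth_pd2.
  - apply A_ext with (1 := A_plus _ _ _ IHf IHg).
    intros a b Hab. unfold pd2.
    destruct (Alg_base U HU f Hf a b Hab) as [_ [A _]].
    destruct (Alg_base U HU g Hg a b Hab) as [_ [A' _]].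
    symmetry; apply (Derive_plus (fun t => f a t) (fun t => g a t)); auto.
  - apply A_ext with (1 := A_plus _ _ _ (A_mult _ _ _ IHf Hg) (A_mult _ _ _ Hf IHg)).
    intros a b Hab. unfold pd2.
    destruct (Alg_base U HU f Hf a b Hab) as [_ [A _]].
    destruct (Alg_base U HU g Hg a b Hab) as [_ [A' _]].
    symmetry; apply (Derive_mult (fun t => f a t) (fun t => g a t)); auto.
  - apply A_ext with (1 := A_opp _ _ IHf).
    intros a b Hab. unfold pd2. symmetry; apply (Derive_opp (fun t => f a t)).
  - apply A_ext with (1 := A_opp _ _ (A_mult _ _ _ (A_mult _ _ _ IHf (A_inv _ _ Hf Hnz)) (A_inv _ _ Hf Hnz))).
    intros a b Hab. unfold pd2.
    destruct (Alg_base U HU f Hf a b Hab) as [_ [A _]].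
    rewrite (Derive_inv (fun t => f a t)); auto. specialize (Hnz a b Hab). field; auto.
  - apply A_ext with (1 := IHf). intros a b Hab.
    apply (iter_pd_ext U f g HU Hfg (D2 :: nil)); auto.
Qed.

Lemma Alg_smooth U f : open2 U -> Alg U f -> smooth_on U f.
Proof.
  intros HU. apply smooth_class with (C := Alg U).
  - apply Alg_base; auto.
  - apply Alg_pd1; auto.
  - apply Alg_pd2; auto.
Qed.

Inductive Elem : (R -> R -> R) -> Prop :=
| E_c c : Elem (fun _ _ => c)
| E_1 : Elem (fun a _ => a)
| E_2 : Elem (fun _ b => b).

Lemma Elem_smooth D f : Elem f -> smooth_on D f.
Proof.
  apply smooth_class with (C := Elem).
  - intros g Hg u v _. rewrite base_iff. destruct Hg; split; try split.
    all: try apply ex_derive_const; try apply ex_derive_id.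
    all: try apply continuity_2d_pt_const; try apply continuity_2d_pt_id1; try apply continuity_2d_pt_id2.
  - intros g Hg; destruct Hg.
    + replace (pd1 (fun _ _ => c)) with (fun _ _ : R => 0). constructor.
      apply functional_extensionality; intro a; apply functional_extensionality; intro b.
      unfold pd1; now rewrite Derive_const.
    + replace (pd1 (fun a _ => a)) with (fun _ _ : R => 1). constructor.
      apply functional_extensionality; intro a; apply functional_extensionality; intro b.
      unfold pd1; now rewrite (Derive_id a : Derive (fun t => t) a = 1).
    + replace (pd1 (fun _ b => b)) with (fun _ _ : R => 0). constructor.
      apply functional_extensionality; intro a; apply functional_extensionality; intro b.
      unfold pd1; now rewrite Derive_const.
  - intros g Hg; destruct Hg.
    + replace (pd2 (fun _ _ => c)) with (fun _ _ : R => 0). constructor.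
      apply functional_extensionality; intro a; apply functional_extensionality; intro b.
      unfold pd2; now rewrite Derive_const.
    + replace (pd2 (fun a _ => a)) with (fun _ _ : R => 0). constructor.
      apply functional_extensionality; intro a; apply functional_extensionality; intro b.
      unfold pd2; now rewrite Derive_const.
    + replace (pd2 (fun _ b => b)) with (fun _ _ : R => 1). constructor.
      apply functional_extensionality; intro a; apply functional_extensionality; intro b.
      unfold pd2; now rewrite (Derive_id b : Derive (fun t => t) b = 1).
Qed.

Lemma ineq_core q A E H L e' eps : 0 < Rabs q -> 0 < H -> 0 < eps -> 0 <= A -> 0 <= E -> 0 <= L ->
  Rabs q * A <= e' * (H + E) -> E <= A + L * H ->
  e' <= Rabs q / 2 -> e' <= eps * Rabs q / (2 * (2 * L + 2)) -> 0 < e' ->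
  A < eps * H.
Proof.
  intros Hq HH He HA HE HL H1 H2 H3 H4 H5.
  assert (A <= (H + E) / 2).
  { apply Rmult_le_reg_l with (Rabs q); auto.
    eapply Rle_trans; [exact H1|]. nra. }
  assert (E <= (2 * L + 1) * H) by lra.
  assert (H7 : Rabs q * A <= e' * ((2 * L + 2) * H)).
  { eapply Rle_trans; [exact H1|]. apply Rmult_le_compat_l; lra. }
  assert (e' * (2 * L + 2) <= eps * Rabs q / 2).
  { apply Rmult_le_compat_r with (r := 2 * L + 2) in H4; [|lra].
    replace (eps * Rabs q / (2 * (2 * L + 2)) * (2 * L + 2)) with (eps * Rabs q / 2) in H4 by (field; lra).
    lra. }
  assert (Hfin : Rabs q * A <= Rabs q * (eps * H / 2)).
  { eapply Rle_trans; [exact H7|].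
    replace (e' * ((2 * L + 2) * H)) with ((e' * (2 * L + 2)) * H) by ring.
    replace (Rabs q * (eps * H / 2)) with ((eps * Rabs q / 2) * H) by (field).
    apply Rmult_le_compat_r; lra. }
  assert (Hx : A <= eps * H / 2) by (apply Rmult_le_reg_l with (Rabs q); auto).
  apply Rle_lt_trans with (1 := Hx). clear -HH He. nra.
Qed.

Lemma impl_deriv (f : R -> R -> R) x y p q (g : R -> R) tau al be :
  q <> 0 -> differentiable_pt_lim f x y p q -> Rabs al <= 1 ->
  g tau = y -> continuity_pt g tau ->
  locally tau (fun t => f (x + al * (t - tau)) (g t) = f x y + be * (t - tau)) ->
  is_derive g tau ((be - p * al) / q).
Proof.
  intros Hq Hd Hal Hg Hc Hloc.
  apply is_derive_Reals. intros eps Heps.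
  set (L := (be - p * al) / q).
  assert (Hqa : 0 < Rabs q) by (apply Rabs_pos_lt; auto).
  set (M := 2 * Rabs L + 2).
  assert (HM : 0 < M) by (unfold M; generalize (Rabs_pos L); lra).
  set (e' := Rmin (Rabs q / 2) (eps * Rabs q / (2 * M))).
  assert (He' : 0 < e').
  { unfold e'; apply Rmin_pos; [lra|]. apply Rdiv_lt_0_compat; nra. }
  destruct (Hd (mkposreal e' He')) as [d1 Hd1].
  destruct (Hc d1 (cond_pos d1)) as [d2 [Hd2 Hc2]].
  destruct Hloc as [d3 Hd3].
  assert (Hdel : 0 < Rmin d1 (Rmin d2 d3)).
  { apply Rmin_pos; [apply cond_pos|apply Rmin_pos; [lra|apply cond_pos]]. }
  exists (mkposreal _ Hdel). simpl. intros h Hh0 Hh.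
  assert (Hh1 : Rabs h < d1) by (eapply Rlt_le_trans; [exact Hh|apply Rmin_l]).
  assert (Hh2 : Rabs h < d2) by (eapply Rlt_le_trans; [exact Hh|]; eapply Rle_trans; [apply Rmin_r|apply Rmin_l]).
  assert (Hh3 : Rabs h < d3) by (eapply Rlt_le_trans; [exact Hh|]; eapply Rle_trans; [apply Rmin_r|apply Rmin_r]).
  assert (Ht3 : ball tau d3 (tau + h)).
  { unfold ball; simpl; unfold AbsRing_ball, abs, minus, plus, opp; simpl.
    replace (tau + h + - tau) with h by ring. exact Hh3. }
  specialize (Hd3 _ Ht3). simpl in Hd3.
  replace (tau + h - tau) with h in Hd3 by ring.
  assert (Hge : Rabs (g (tau + h) - y) < d1).
  { destruct (Req_dec h 0) as [E|E]; [contradiction|].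
    rewrite <- Hg. apply Hc2. split.
    - unfold D_x, no_cond; split; auto. lra.
    - unfold R_dist; simpl; unfold Rdist. replace (tau + h - tau) with h by ring. exact Hh2. }
  assert (Hah : Rabs (x + al * h - x) < d1).
  { replace (x + al * h - x) with (al * h) by ring. rewrite Rabs_mult.
    eapply Rle_lt_trans; [|exact Hh1].
    rewrite <- (Rmult_1_l (Rabs h)) at 2. apply Rmult_le_compat_r; auto. apply Rabs_pos. }
  specialize (Hd1 _ _ Hah Hge). simpl in Hd1.
  rewrite Hd3 in Hd1.
  set (e := g (tau + h) - y) in *.
  replace (x + al * h - x) with (al * h) in Hd1 by ring.
  replace (f x y + be * h - f x y - (p * (al * h) + q * e)) with (q * (L * h - e)) in Hd1
    by (unfold L; field; auto).
  replace ((g (tau + h) - g tau) / h - L) with ((e - L * h) / h) by (unfold e; rewrite Hg; field; auto).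
  rewrite Rabs_div; auto.
  assert (HH : 0 < Rabs h) by (apply Rabs_pos_lt; auto).
  apply Rlt_div_l; auto.
  rewrite Rabs_mult in Hd1. rewrite (Rabs_minus_sym (L * h) e) in Hd1.
  apply ineq_core with q (Rabs e) (Rabs L) e'; auto.
  - apply Rabs_pos.
  - apply Rabs_pos.
  - apply Rabs_pos.
  - eapply Rle_trans; [exact Hd1|]. apply Rmult_le_compat_l; [lra|].
    apply Rmax_lub; [|generalize (Rabs_pos h); lra].
    rewrite Rabs_mult. generalize (Rabs_pos e) (Rabs_pos h) (Rabs_pos al). nra.
  - replace e with ((e - L * h) + L * h) at 1 by ring.
    eapply Rle_trans; [apply Rabs_triang|]. rewrite Rabs_mult. lra.
  - apply Rmin_l.
  - unfold e'; fold M. apply Rmin_r.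
Qed.

Section IFT.
Variables (f : R -> R -> R) (x0 y0 d s : R).
Hypothesis Hd : 0 < d.
Hypothesis Hs : Rabs s = 1.
Hypothesis Hbox : forall x y, Rabs (x - x0) < d -> Rabs (y - y0) < d ->
  continuity_2d_pt f x y /\ is_derive (fun t => f x t) y (pd2 f x y) /\ 0 < s * pd2 f x y.

Let r := d / 2.
Definition Ub x y := Rabs (x - x0) < d /\ Rabs (y - y0) < r.
Definition Vb x z := Rabs (x - x0) < d /\ s * f x (y0 - r) < s * z < s * f x (y0 + r).
Definition psib x z := epsilon (inhabits 0) (fun y => Rabs (y - y0) < r /\ f x y = z).

Lemma mono x y1 y2 : Rabs (x - x0) < d -> Rabs (y1 - y0) <= r -> Rabs (y2 - y0) <= r ->
  y1 < y2 -> s * f x y1 < s * f x y2.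
Proof.
  intros Hx H1 H2 H12.
  apply (incr_function_le (fun t => s * f x t) (Finite (y0 - r)) (Finite (y0 + r)) (fun t => s * pd2 f x t)).
  - simpl; intros t Ht1 Ht2. apply is_derive_scal. apply Hbox; auto.
    unfold r in *; apply Rabs_def1; lra.
  - simpl; intros t Ht1 Ht2. apply Hbox; auto. unfold r in *; apply Rabs_def1; lra.
  - simpl. apply Rabs_le_between in H1; lra.
  - auto.
  - simpl. apply Rabs_le_between in H2; lra.
Qed.

Lemma mono_le x y1 y2 : Rabs (x - x0) < d -> Rabs (y1 - y0) <= r -> Rabs (y2 - y0) <= r ->
  y1 <= y2 -> s * f x y1 <= s * f x y2.
Proof.
  intros Hx H1 H2 [H|H]. left; apply mono; auto. subst; lra.
Qed.

Lemma mono_inj x y1 y2 : Rabs (x - x0) < d -> Rabs (y1 - y0) <= r -> Rabs (y2 - y0) <= r ->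
  f x y1 = f x y2 -> y1 = y2.
Proof.
  intros Hx H1 H2 E. destruct (Rtotal_order y1 y2) as [L|[L|L]]; auto.
  - generalize (mono x y1 y2 Hx H1 H2 L). rewrite E; lra.
  - generalize (mono x y2 y1 Hx H2 H1 L). rewrite E; lra.
Qed.

Lemma sabs a : Rabs (s * a) = Rabs a.
Proof. rewrite Rabs_mult, Hs; ring. Qed.

Lemma sandwich_loc x z y1 y2 : Rabs (x - x0) < d -> Rabs (y1 - y0) <= r -> Rabs (y2 - y0) <= r ->
  s * f x y1 < s * z < s * f x y2 ->
  locally_2d (fun u w => Rabs (u - x0) < d /\ s * f u y1 < s * w < s * f u y2) x z.
Proof.
  intros Hx H1 H2 [Hz1 Hz2].
  set (g1 := s * z - s * f x y1). set (g2 := s * f x y2 - s * z).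
  assert (Hg1 : 0 < g1 / 2) by (unfold g1; lra).
  assert (Hg2 : 0 < g2 / 2) by (unfold g2; lra).
  assert (Hy1 : Rabs (y1 - y0) < d) by (unfold r in *; lra).
  assert (Hy2 : Rabs (y2 - y0) < d) by (unfold r in *; lra).
  destruct (proj1 (Hbox x y1 Hx Hy1) (mkposreal _ Hg1)) as [da Ha].
  destruct (proj1 (Hbox x y2 Hx Hy2) (mkposreal _ Hg2)) as [db Hb].
  assert (Hdx : 0 < d - Rabs (x - x0)) by lra.
  assert (Hdel : 0 < Rmin (Rmin da db) (Rmin (d - Rabs (x - x0)) (Rmin (g1/2) (g2/2)))).
  { repeat apply Rmin_pos; try apply cond_pos; lra. }
  exists (mkposreal _ Hdel). simpl. intros u w Hu Hw.
  apply Rmin_Rgt_l in Hu; destruct Hu as [Hu Hu'].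
  apply Rmin_Rgt_l in Hu; destruct Hu as [Hua Hub].
  apply Rmin_Rgt_l in Hu'; destruct Hu' as [Hud Hu'].
  apply Rmin_Rgt_l in Hu'; destruct Hu' as [Hug1 Hug2].
  apply Rmin_Rgt_l in Hw; destruct Hw as [_ Hw'].
  apply Rmin_Rgt_l in Hw'; destruct Hw' as [_ Hw'].
  apply Rmin_Rgt_l in Hw'; destruct Hw' as [Hw Hw2].
  assert (R0 : Rabs (y1 - y1) < da) by (rewrite Rminus_diag, Rabs_R0; apply cond_pos).
  assert (R1 : Rabs (y2 - y2) < db) by (rewrite Rminus_diag, Rabs_R0; apply cond_pos).
  specialize (Ha u y1 ltac:(assumption) R0). specialize (Hb u y2 ltac:(assumption) R1). simpl in Ha, Hb.
  split; [|split].
  - replace (u - x0) with ((u - x) + (x - x0)) by ring.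
    eapply Rle_lt_trans; [apply Rabs_triang|]. lra.
  - rewrite <- (sabs (f u y1 - f x y1)) in Ha. rewrite <- (sabs (w - z)) in Hw.
    simpl in Ha. apply Rabs_def2 in Ha; apply Rabs_def2 in Hw. unfold g1 in *. lra.
  - rewrite <- (sabs (f u y2 - f x y2)) in Hb. rewrite <- (sabs (w - z)) in Hw2.
    simpl in Hb. apply Rabs_def2 in Hb; apply Rabs_def2 in Hw2. unfold g2 in *. lra.
Qed.

Lemma Vb_open : open2 Vb.
Proof.
  apply open2_loc. intros x z [Hx Hz].
  assert (H1 : Rabs (y0 - r - y0) <= r) by (replace (y0 - r - y0) with (- r) by ring; rewrite Rabs_Ropp, Rabs_right; unfold r; lra).
  assert (H2 : Rabs (y0 + r - y0) <= r) by (replace (y0 + r - y0) with r by ring; rewrite Rabs_right; unfold r; lra).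
  exact (sandwich_loc x z _ _ Hx H1 H2 Hz).
Qed.

Lemma Ub_open : open2 Ub.
Proof.
  apply open2_loc. intros x y [Hx Hy].
  assert (Hdel : 0 < Rmin (d - Rabs (x - x0)) (r - Rabs (y - y0))) by (apply Rmin_pos; lra).
  exists (mkposreal _ Hdel). simpl. intros u v Hu Hv.
  apply Rmin_Rgt_l in Hu; apply Rmin_Rgt_l in Hv. split.
  - replace (u - x0) with ((u - x) + (x - x0)) by ring.
    eapply Rle_lt_trans; [apply Rabs_triang|]. lra.
  - replace (v - y0) with ((v - y) + (y - y0)) by ring.
    eapply Rle_lt_trans; [apply Rabs_triang|]. lra.
Qed.

Lemma Ub_to_Vb x y : Ub x y -> Vb x (f x y) /\ psib x (f x y) = y.
Proof.
  intros [Hx Hy]. split.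
  - split; auto. split; apply mono; auto.
    + replace (y0 - r - y0) with (- r) by ring; rewrite Rabs_Ropp, Rabs_right; unfold r in *; lra.
    + lra.
    + apply Rabs_def2 in Hy; lra.
    + lra.
    + replace (y0 + r - y0) with r by ring; rewrite Rabs_right; unfold r in *; lra.
    + apply Rabs_def2 in Hy; lra.
  - unfold psib.
    destruct (epsilon_spec (inhabits 0) (fun y' => Rabs (y' - y0) < r /\ f x y' = f x y)) as [H1 H2].
    + exists y; auto.
    + apply mono_inj with x; auto; lra.
Qed.

Lemma Vb_to_Ub x z : Vb x z -> Ub x (psib x z) /\ f x (psib x z) = z.
Proof.
  intros [Hx [Hz1 Hz2]].
  assert (Ex : exists y, Rabs (y - y0) < r /\ f x y = z).
  { assert (Hr : 0 < r) by (unfold r; lra).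
    destruct (Ranalysis5.IVT_interv (fun t => s * f x t - s * z) (y0 - r) (y0 + r)) as [y [Hy Hfy]].
    - intros a Ha. apply continuity_pt_minus; [|apply continuity_pt_const; intros ? ?; auto].
      apply continuity_pt_scal.
      assert (Hc : continuity_2d_pt f x a) by (apply Hbox; auto; apply Rabs_def1; unfold r in *; lra).
      intros eps Heps. destruct (Hc (mkposreal _ Heps)) as [del Hdel].
      exists del; split; [apply cond_pos|]. intros t [_ Ht]. simpl in *. unfold Rdist in *.
      apply Hdel; auto. rewrite Rminus_diag, Rabs_R0; apply cond_pos.
    - lra.
    - lra.
    - lra.
    - exists y. simpl in Hfy.
      assert (y <> y0 - r) by (intro E; subst; lra).
      assert (y <> y0 + r) by (intro E; subst; lra).
      split.
      + apply Rabs_def1; lra.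
      + apply Rmult_eq_reg_l with s; [lra|]. intro E; rewrite E, Rabs_R0 in Hs; lra. }
  destruct (epsilon_spec (inhabits 0) (fun y => Rabs (y - y0) < r /\ f x y = z) Ex) as [H1 H2].
  split; [split|]; auto.
Qed.

Lemma psib_cont x z : Vb x z -> continuity_2d_pt psib x z.
Proof.
  intros HV. destruct (Vb_to_Ub x z HV) as [[Hx Hy] Hf].
  set (y := psib x z) in *.
  intros eps.
  set (e := Rmin eps (r - Rabs (y - y0)) / 2).
  assert (He : 0 < e) by (unfold e; apply Rdiv_lt_0_compat; [apply Rmin_pos; [apply cond_pos|lra]|lra]).
  assert (He1 : e < eps) by (unfold e; generalize (Rmin_l eps (r - Rabs (y - y0))) (cond_pos eps); lra).
  assert (He2 : e < r - Rabs (y - y0)) by (unfold e; generalize (Rmin_r eps (r - Rabs (y - y0))); lra).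
  assert (Hy1 : Rabs (y - e - y0) <= r).
  { apply Rabs_le. apply Rabs_def2 in Hy. destruct (Rabs_le_between (y - y0) (Rabs (y - y0))) as [A _].
    generalize (Rle_abs (y - y0)) (Rabs_maj2 (y - y0)). lra. }
  assert (Hy2 : Rabs (y + e - y0) <= r).
  { apply Rabs_le. generalize (Rle_abs (y - y0)) (Rabs_maj2 (y - y0)). lra. }
  assert (Hya : Rabs (y - y0) <= r) by lra.
  assert (Hs1 : s * f x (y - e) < s * z) by (rewrite <- Hf; apply mono; auto; lra).
  assert (Hs2 : s * z < s * f x (y + e)) by (rewrite <- Hf; apply mono; auto; lra).
  destruct (sandwich_loc x z (y - e) (y + e) Hx Hy1 Hy2 (conj Hs1 Hs2)) as [del Hdel].
  exists del. intros u w Hu Hw. destruct (Hdel u w Hu Hw) as [Hu0 [Hw1 Hw2]].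
  assert (HVuw : Vb u w).
  { split; auto. split.
    - eapply Rle_lt_trans; [|exact Hw1]. apply mono_le; auto; [|apply Rabs_le_between in Hy1; lra].
      replace (y0 - r - y0) with (- r) by ring; rewrite Rabs_Ropp, Rabs_right; unfold r in *; lra.
    - eapply Rlt_le_trans; [exact Hw2|]. apply mono_le; auto; [|apply Rabs_le_between in Hy2; lra].
      replace (y0 + r - y0) with r by ring; rewrite Rabs_right; unfold r in *; lra. }
  destruct (Vb_to_Ub u w HVuw) as [[_ Hy'] Hf'].
  set (y' := psib u w) in *.
  assert (y - e < y').
  { destruct (Rlt_or_le (y - e) y') as [A|A]; auto.
    assert (s * f u y' <= s * f u (y - e)) by (apply mono_le; auto; lra).
    rewrite Hf' in H. lra. }
  assert (y' < y + e).
  { destruct (Rlt_or_le y' (y + e)) as [A|A]; auto.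
    assert (s * f u (y + e) <= s * f u y') by (apply mono_le; auto; lra).
    rewrite Hf' in H0. lra. }
  change (psib x z) with y. apply Rabs_def1; lra.
Qed.


Lemma cont2d_1 (h : R -> R -> R) x z : continuity_2d_pt h x z -> continuity_pt (fun t => h t z) x.
Proof.
  intros Hc eps Heps. destruct (Hc (mkposreal _ Heps)) as [del Hdel].
  exists del; split; [apply cond_pos|]. intros t [_ Ht]. simpl in *. unfold Rdist in *.
  apply Hdel; auto. rewrite Rminus_diag, Rabs_R0; apply cond_pos.
Qed.
Lemma cont2d_2 (h : R -> R -> R) x z : continuity_2d_pt h x z -> continuity_pt (fun t => h x t) z.
Proof.
  intros Hc eps Heps. destruct (Hc (mkposreal _ Heps)) as [del Hdel].
  exists del; split; [apply cond_pos|]. intros t [_ Ht]. simpl in *. unfold Rdist in *.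
  apply Hdel; auto. rewrite Rminus_diag, Rabs_R0; apply cond_pos.
Qed.

Hypothesis Hdiff : forall x y, Ub x y -> differentiable_pt_lim f x y (pd1 f x y) (pd2 f x y).

Lemma Ub_q x y : Ub x y -> pd2 f x y <> 0.
Proof.
  intros [Hx Hy] E. destruct (Hbox x y Hx) as [_ [_ H]]; [unfold r in *; lra|].
  rewrite E in H; lra.
Qed.

Lemma psib_dx x z : Vb x z ->
  is_derive (fun t => psib t z) x (- pd1 f x (psib x z) / pd2 f x (psib x z)).
Proof.
  intros HV. destruct (Vb_to_Ub x z HV) as [HU Hf].
  assert (Hq := Ub_q _ _ HU).
  replace (- pd1 f x (psib x z) / pd2 f x (psib x z)) with
    ((0 - pd1 f x (psib x z) * 1) / pd2 f x (psib x z)) by (field; auto).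
  apply (impl_deriv f x (psib x z)); auto.
  - rewrite Rabs_R1; lra.
  - apply cont2d_1. now apply psib_cont.
  - generalize (open2_loc1 _ _ _ Vb_open HV). apply filter_imp. intros t Ht. change R in t.
    replace (x + 1 * (t - x)) with t by ring. rewrite Hf.
    rewrite (proj2 (Vb_to_Ub t z Ht)). ring.
Qed.

Lemma psib_dz x z : Vb x z ->
  is_derive (fun t => psib x t) z (/ pd2 f x (psib x z)).
Proof.
  intros HV. destruct (Vb_to_Ub x z HV) as [HU Hf].
  assert (Hq := Ub_q _ _ HU).
  replace (/ pd2 f x (psib x z)) with
    ((1 - pd1 f x (psib x z) * 0) / pd2 f x (psib x z)) by (field; auto).
  apply (impl_deriv f x (psib x z)); auto.
  - rewrite Rabs_R0; lra.
  - apply cont2d_2. now apply psib_cont.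
  - generalize (open2_loc2 _ _ _ Vb_open HV). apply filter_imp. intros t Ht. change R in t.
    replace (x + 0 * (t - z)) with x by ring. rewrite Hf.
    rewrite (proj2 (Vb_to_Ub x t Ht)). ring.
Qed.

End IFT.

Section Comp.
Variables (U V : R -> R -> Prop) (psi A B : R -> R -> R).
Hypothesis HU : open2 U.
Hypothesis HV : open2 V.
Hypothesis HVU : forall x z, V x z -> U x (psi x z).
Hypothesis Hc : forall x z, V x z -> continuity_2d_pt psi x z.
Hypothesis Hdx : forall x z, V x z -> is_derive (fun t => psi t z) x (A x (psi x z)).
Hypothesis Hdz : forall x z, V x z -> is_derive (fun t => psi x t) z (B x (psi x z)).
Hypothesis HA : smooth_on U A.
Hypothesis HB : smooth_on U B.

Lemma comp_dx H x z : smooth_on U H -> V x z ->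
  is_derive (fun t => H t (psi t z)) x (pd1 H x (psi x z) + pd2 H x (psi x z) * A x (psi x z)).
Proof.
  intros HH Hxz. apply is_derive_Reals.
  replace (pd1 H x (psi x z) + pd2 H x (psi x z) * A x (psi x z))
    with (pd1 H x (psi x z) * 1 + pd2 H x (psi x z) * A x (psi x z)) by ring.
  apply (derivable_pt_lim_comp_2d H (fun t => t) (fun t => psi t z)).
  - apply smooth_diff with U; auto.
  - apply derivable_pt_lim_id.
  - apply is_derive_Reals. auto.
Qed.

Lemma comp_dz H x z : smooth_on U H -> V x z ->
  is_derive (fun t => H x (psi x t)) z (pd2 H x (psi x z) * B x (psi x z)).
Proof.
  intros HH Hxz. apply is_derive_Reals.
  replace (pd2 H x (psi x z) * B x (psi x z))
    with (pd1 H x (psi x z) * 0 + pd2 H x (psi x z) * B x (psi x z)) by ring.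
  apply (derivable_pt_lim_comp_2d H (fun _ => x) (fun t => psi x t)).
  - apply smooth_diff with U; auto.
  - apply derivable_pt_lim_const.
  - apply is_derive_Reals. auto.
Qed.

Lemma comp_cont H x z : smooth_on U H -> V x z -> continuity_2d_pt (fun a b => H a (psi a b)) x z.
Proof.
  intros HH Hxz eps.
  assert (C1 : continuity_2d_pt H x (psi x z)).
  { apply cont_2d. apply (smooth_base0 U H _ _ HH (HVU _ _ Hxz)). }
  destruct (C1 eps) as [d1 Hd1].
  destruct (Hc x z Hxz d1) as [d2 Hd2].
  exists (mkposreal _ (Rmin_pos _ _ (cond_pos d1) (cond_pos d2))). simpl.
  intros u w Hu Hw. apply Hd1.
  - eapply Rlt_le_trans; [exact Hu|apply Rmin_l].
  - apply Hd2; (eapply Rlt_le_trans; [eassumption|apply Rmin_r]).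
Qed.

Definition CompC (g : R -> R -> R) : Prop :=
  exists H, smooth_on U H /\ forall x z, V x z -> g x z = H x (psi x z).

Lemma comp_pd1 g H x z : smooth_on U H -> (forall x z, V x z -> g x z = H x (psi x z)) -> V x z ->
  pd1 g x z = pd1 H x (psi x z) + pd2 H x (psi x z) * A x (psi x z).
Proof.
  intros HH Hg Hxz. unfold pd1 at 1.
  rewrite (Derive_ext_loc (fun t => g t z) (fun t => H t (psi t z))).
  - apply is_derive_unique. apply comp_dx; auto.
  - generalize (open2_loc1 _ _ _ HV Hxz). apply filter_imp. intros t Ht; auto.
Qed.

Lemma comp_pd2 g H x z : smooth_on U H -> (forall x z, V x z -> g x z = H x (psi x z)) -> V x z ->
  pd2 g x z = pd2 H x (psi x z) * B x (psi x z).
Proof.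
  intros HH Hg Hxz. unfold pd2 at 1.
  rewrite (Derive_ext_loc (fun t => g x t) (fun t => H x (psi x t))).
  - apply is_derive_unique. apply comp_dz; auto.
  - generalize (open2_loc2 _ _ _ HV Hxz). apply filter_imp. intros t Ht; auto.
Qed.

Lemma CompC_smooth g : CompC g -> smooth_on V g.
Proof.
  apply smooth_class.
  - intros h [H [HH Hh]] u v Huv.
    apply (base_ext V (fun a b => H a (psi a b)) h u v); auto.
    + intros; symmetry; auto.
    + rewrite base_iff. split; [|split].
      * eexists; apply comp_dx; auto.
      * eexists; apply comp_dz; auto.
      * apply comp_cont; auto.
  - intros h [H [HH Hh]].
    exists (fun a b => pd1 H a b + pd2 H a b * A a b). split.
    + apply Alg_smooth; auto.
      apply A_plus; [apply A_sm; now apply smooth_pd1|].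
      apply A_mult; apply A_sm; auto. now apply smooth_pd2.
    + intros x z Hxz. apply (comp_pd1 h H x z); auto.
  - intros h [H [HH Hh]].
    exists (fun a b => pd2 H a b * B a b). split.
    + apply Alg_smooth; auto.
      apply A_mult; apply A_sm; auto. now apply smooth_pd2.
    + intros x z Hxz. apply (comp_pd2 h H x z); auto.
Qed.

Lemma psi_smooth : smooth_on V psi.
Proof.
  apply CompC_smooth. exists (fun _ b => b). split.
  - apply Elem_smooth. constructor.
  - auto.
Qed.

End Comp.

Lemma smooth_restrict D D' f : smooth_on D f -> (forall x y, D' x y -> D x y) -> smooth_on D' f.
Proof. intros H HD ds u v Huv. apply H; auto. Qed.

Lemma schwarz_smooth D f x y : open2 D -> smooth_on D f -> D x y ->
  pd1 (pd2 f) x y = pd2 (pd1 f) x y.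
Proof.
  intros HD Hf Hxy. unfold pd1, pd2. apply Schwarz.
  - destruct (proj1 (open2_loc D) HD x y Hxy) as [del Hdel].
    exists del. intros u v Hu Hv. specialize (Hdel u v Hu Hv).
    destruct (smooth_base0 D f u v Hf Hdel) as [A [B _]].
    destruct (smooth_base0 D (pd2 f) u v (smooth_pd2 D f Hf) Hdel) as [C _].
    destruct (smooth_base0 D (pd1 f) u v (smooth_pd1 D f Hf) Hdel) as [_ [E _]].
    repeat split; auto.
  - apply cont_2d. apply (smooth_base0 D (pd1 (pd2 f)) x y); auto.
    apply smooth_pd1, smooth_pd2; auto.
  - apply cont_2d. apply (smooth_base0 D (pd2 (pd1 f)) x y); auto.
    apply smooth_pd2, smooth_pd1; auto.
Qed.

Definition PDE (phi : R -> R -> R) x y :=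
  (1 - pd2 phi x y ^ 2) * pd1 (pd1 phi) x y
  + 2 * pd1 phi x y * pd2 phi x y * pd2 (pd1 phi) x y
  + (1 - pd1 phi x y ^ 2) * pd2 (pd2 phi) x y.

Section Deriv.
Variables (D : R -> R -> Prop) (phi : R -> R -> R) (x y : R).
Hypothesis HD : open2 D.
Hypothesis Hphi : smooth_on D phi.
Hypothesis Hxy : D x y.
Hypothesis Hq : pd2 phi x y <> 0.

Let eA1 := smooth_base0 D (pd1 phi) x y (smooth_pd1 D phi Hphi) Hxy.
Let eB1 := smooth_base0 D (pd2 phi) x y (smooth_pd2 D phi Hphi) Hxy.

Lemma dA1 : pd1 (fun a b => - pd1 phi a b / pd2 phi a b) x y =
  - (pd1 (pd1 phi) x y * pd2 phi x y - pd1 phi x y * pd1 (pd2 phi) x y) / pd2 phi x y ^ 2.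
Proof.
  destruct eA1 as [A1 [A2 _]]; destruct eB1 as [B1 [B2 _]].
  unfold pd1 at 1.
  rewrite (Derive_div (fun t => - pd1 phi t y) (fun t => pd2 phi t y)); auto.
  - rewrite (Derive_opp (fun t => pd1 phi t y)).
    change (Derive (fun t => pd1 phi t y) x) with (pd1 (pd1 phi) x y).
    change (Derive (fun t => pd2 phi t y) x) with (pd1 (pd2 phi) x y). field; auto.
  - apply (ex_derive_opp (fun t => pd1 phi t y)); auto.
Qed.

Lemma dA2 : pd2 (fun a b => - pd1 phi a b / pd2 phi a b) x y =
  - (pd2 (pd1 phi) x y * pd2 phi x y - pd1 phi x y * pd2 (pd2 phi) x y) / pd2 phi x y ^ 2.
Proof.
  destruct eA1 as [A1 [A2 _]]; destruct eB1 as [B1 [B2 _]].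
  unfold pd2 at 1.
  rewrite (Derive_div (fun t => - pd1 phi x t) (fun t => pd2 phi x t)); auto.
  - rewrite (Derive_opp (fun t => pd1 phi x t)).
    change (Derive (fun t => pd1 phi x t) y) with (pd2 (pd1 phi) x y).
    change (Derive (fun t => pd2 phi x t) y) with (pd2 (pd2 phi) x y). field; auto.
  - apply (ex_derive_opp (fun t => pd1 phi x t)); auto.
Qed.

Lemma dB2 : pd2 (fun a b => / pd2 phi a b) x y = - pd2 (pd2 phi) x y / pd2 phi x y ^ 2.
Proof.
  destruct eB1 as [B1 [B2 _]].
  unfold pd2 at 1.
  rewrite (Derive_inv (fun t => pd2 phi x t)); auto.
Qed.
End Deriv.

Lemma core Omega phi : open2 Omega -> smooth_on Omega phi ->
  (forall x y, Omega x y -> PDE phi x y = 0) ->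
  forall x0 y0, Omega x0 y0 -> pd2 phi x0 y0 <> 0 ->
  exists U : R -> R -> Prop,
    open2 U /\ U x0 y0 /\ (forall x y, U x y -> Omega x y) /\
    exists (V : R -> R -> Prop) (psi : R -> R -> R),
      open2 V /\ smooth_on V psi /\ born_infeld V psi /\
      ((forall x y, U x y -> V x (phi x y) /\ psi x (phi x y) = y) /\
       (forall x z, V x z -> U x (psi x z) /\ phi x (psi x z) = z)).
Proof.
  intros HO Hphi HPDE x0 y0 H0 Hq0.
  set (q0 := pd2 phi x0 y0) in *.
  assert (Haq : 0 < Rabs q0) by (apply Rabs_pos_lt; auto).
  assert (Hnz : Rabs q0 <> 0) by lra.
  set (s := q0 / Rabs q0).
  assert (Hs : Rabs s = 1).
  { unfold s. rewrite Rabs_div; auto. rewrite Rabs_Rabsolu. field; auto. }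
  assert (Hsq : s * q0 = Rabs q0).
  { unfold s. destruct (Rcase_abs q0) as [N|P].
    - rewrite (Rabs_left q0 N). field. intro; lra.
    - rewrite (Rabs_right q0 P). field. auto. }
  destruct (proj1 (open2_loc Omega) HO x0 y0 H0) as [d1 Hd1].
  assert (Cq : continuity_2d_pt (pd2 phi) x0 y0).
  { apply cont_2d. apply (smooth_base0 Omega (pd2 phi)); auto. apply smooth_pd2; auto. }
  assert (Hh : 0 < Rabs q0 / 2) by lra.
  destruct (Cq (mkposreal _ Hh)) as [d2 Hd2].
  set (d := Rmin d1 d2).
  assert (Hd : 0 < d) by (apply Rmin_pos; apply cond_pos).
  assert (HbO : forall x y, Rabs (x - x0) < d -> Rabs (y - y0) < d -> Omega x y).
  { intros x y Hx Hy. apply Hd1; (eapply Rlt_le_trans; [eassumption|apply Rmin_l]). }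
  assert (Hbox : forall x y, Rabs (x - x0) < d -> Rabs (y - y0) < d ->
    continuity_2d_pt phi x y /\ is_derive (fun t => phi x t) y (pd2 phi x y) /\ 0 < s * pd2 phi x y).
  { intros x y Hx Hy. assert (HxyO := HbO x y Hx Hy).
    destruct (smooth_base0 Omega phi x y Hphi HxyO) as [_ [B C]].
    split; [apply cont_2d; auto|split].
    - apply Derive_correct; auto.
    - assert (E : Rabs (pd2 phi x y - q0) < Rabs q0 / 2).
      { apply Hd2; (eapply Rlt_le_trans; [eassumption|apply Rmin_r]). }
      assert (E2 : Rabs (s * (pd2 phi x y - q0)) < Rabs q0 / 2) by (rewrite Rabs_mult, Hs; lra).
      apply Rabs_def2 in E2.
      replace (s * pd2 phi x y) with (s * (pd2 phi x y - q0) + s * q0) by ring. lra. }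
  set (U := Ub x0 y0 d).
  set (V := Vb phi x0 y0 d s).
  set (psi := psib phi y0 d).
  assert (HUO : forall x y, U x y -> Omega x y).
  { intros x y [Hx Hy]. apply HbO; auto. lra. }
  assert (HU : open2 U) by (apply Ub_open; auto).
  assert (HV : open2 V) by (apply Vb_open; auto).
  assert (Hdiff : forall x y, U x y -> differentiable_pt_lim phi x y (pd1 phi x y) (pd2 phi x y)).
  { intros x y Hxy. apply smooth_diff with Omega; auto. }
  assert (HphiU : smooth_on U phi) by (apply smooth_restrict with Omega; auto).
  assert (HqU : forall x y, U x y -> pd2 phi x y <> 0).
  { intros x y Hxy. apply (Ub_q phi x0 y0 d s Hd Hbox); auto. }
  set (A := fun a b => - pd1 phi a b / pd2 phi a b).
  set (B := fun a b => / pd2 phi a b).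
  assert (HA : smooth_on U A).
  { apply Alg_smooth; auto.
    apply A_ext with (fun a b => - (pd1 phi a b * / pd2 phi a b)).
    - apply A_opp, A_mult; [apply A_sm, smooth_pd1; auto|].
      apply A_inv; [apply A_sm, smooth_pd2; auto|auto].
    - intros a b _. unfold A, Rdiv. ring. }
  assert (HB : smooth_on U B).
  { apply Alg_smooth; auto. apply A_inv; [apply A_sm, smooth_pd2; auto|auto]. }
  assert (HVU : forall x z, V x z -> U x (psi x z) /\ phi x (psi x z) = z).
  { intros x z Hxz. apply (Vb_to_Ub phi x0 y0 d s Hd Hs Hbox); auto. }
  assert (Hc : forall x z, V x z -> continuity_2d_pt psi x z).
  { intros x z Hxz. apply (psib_cont phi x0 y0 d s Hd Hs Hbox); auto. }
  assert (Hdx : forall x z, V x z -> is_derive (fun t => psi t z) x (A x (psi x z))).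
  { intros x z Hxz. apply (psib_dx phi x0 y0 d s Hd Hs Hbox); auto. }
  assert (Hdz : forall x z, V x z -> is_derive (fun t => psi x t) z (B x (psi x z))).
  { intros x z Hxz. apply (psib_dz phi x0 y0 d s Hd Hs Hbox); auto. }
  assert (HVU' : forall x z, V x z -> U x (psi x z)) by (intros; apply HVU; auto).
  exists U. split; [auto|split; [|split; [auto|]]].
  { split; rewrite Rminus_diag, Rabs_R0; lra. }
  exists V, psi. split; [auto|split; [|split]].
  - apply (psi_smooth U V psi A B); auto.
  - intros x z Hxz.
    set (y := psi x z).
    assert (HUy : U x y) by (apply HVU'; auto).
    assert (HOy := HUO x y HUy).
    assert (Hqy := HqU x y HUy).
    assert (P1 : forall a b, V a b -> pd1 psi a b = A a (psi a b)).
    { intros a b Hab. apply is_derive_unique. apply Hdx; auto. }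
    assert (P2 : forall a b, V a b -> pd2 psi a b = B a (psi a b)).
    { intros a b Hab. apply is_derive_unique. apply Hdz; auto. }
    rewrite (P1 x z Hxz), (P2 x z Hxz).
    rewrite (comp_pd1 U V psi A HU HV HVU' Hdx (pd1 psi) A x z HA P1 Hxz).
    rewrite (comp_pd2 U V psi B HU HV HVU' Hdz (pd1 psi) A x z HA P1 Hxz).
    rewrite (comp_pd2 U V psi B HU HV HVU' Hdz (pd2 psi) B x z HB P2 Hxz).
    fold y. unfold A, B.
    rewrite (dA1 Omega phi x y Hphi HOy Hqy).
    rewrite (dA2 Omega phi x y Hphi HOy Hqy).
    rewrite (dB2 Omega phi x y Hphi HOy Hqy).
    rewrite (schwarz_smooth Omega phi x y HO Hphi HOy).
    generalize (HPDE x y HOy). unfold PDE. intros E. cbv beta.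
    set (p := pd1 phi x y) in *. set (q := pd2 phi x y) in *.
    set (r := pd1 (pd1 phi) x y) in *. set (s2 := pd2 (pd1 phi) x y) in *.
    set (t := pd2 (pd2 phi) x y) in *.
    transitivity (((1 - q ^ 2) * r + 2 * p * q * s2 + (1 - p ^ 2) * t) / q ^ 3).
    + field; auto.
    + rewrite E. field; auto.
  - split.
    + intros x y Hxy. apply (Ub_to_Vb phi x0 y0 d s Hd Hbox); auto.
    + auto.
Qed.

Definition swap (f : R -> R -> R) : R -> R -> R := fun a b => f b a.
Definition flipd (d : dir) := match d with D1 => D2 | D2 => D1 end.

Lemma iter_swap ds f : iter_pd ds (swap f) = swap (iter_pd (map flipd ds) f).
Proof.
  induction ds as [|d ds IH]; simpl; auto. destruct d; simpl; rewrite IH; reflexivity.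
Qed.

Lemma cont_swap g u v : continuity_2d_pt g v u -> continuity_2d_pt (swap g) u v.
Proof.
  intros H eps. destruct (H eps) as [del Hdel]. exists del. intros a b Ha Hb.
  apply Hdel; auto.
Qed.

Lemma open2_swap D : open2 D -> open2 (fun a b => D b a).
Proof.
  intros HD. apply open2_loc. intros x y Hxy.
  destruct (proj1 (open2_loc D) HD y x Hxy) as [del Hdel].
  exists del. intros a b Ha Hb. apply Hdel; auto.
Qed.

Lemma smooth_swap D f : smooth_on D f -> smooth_on (fun a b => D b a) (swap f).
Proof.
  intros Hf. apply smooth_base. intros ds u v Huv.
  rewrite iter_swap.
  assert (Hg : base (iter_pd (map flipd ds) f) v u) by (exact (proj1 (smooth_base D f) Hf _ v u Huv)).
  apply (proj1 (base_iff _ v u)) in Hg. destruct Hg as [A [B C]].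
  apply (proj2 (base_iff _ u v)).
  split; [exact B|split; [exact A|]]. apply cont_swap; exact C.
Qed.

Lemma Xu_graph phi : Xu (graph_z phi) = fun u v => (1, 0, pd1 phi u v).
Proof.
  apply functional_extensionality; intro u; apply functional_extensionality; intro v.
  cbv beta iota delta [Xu graph_z v1 v2 v3 pd1 fst snd].
  rewrite Derive_const. rewrite (Derive_id u : Derive (fun t => t) u = 1). reflexivity.
Qed.

Lemma Xv_graph phi : Xv (graph_z phi) = fun u v => (0, 1, pd2 phi u v).
Proof.
  apply functional_extensionality; intro u; apply functional_extensionality; intro v.
  cbv beta iota delta [Xv graph_z v1 v2 v3 pd2 fst snd].
  rewrite Derive_const. rewrite (Derive_id v : Derive (fun t => t) v = 1). reflexivity.
Qed.

Lemma Xu_c (c1 c2 : R) (h : R -> R -> R) u v :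
  Xu (fun a b => (c1, c2, h a b)) u v = (0, 0, pd1 h u v).
Proof. cbv beta iota delta [Xu v1 v2 v3 pd1 fst snd]. rewrite !Derive_const. reflexivity. Qed.
Lemma Xv_c (c1 c2 : R) (h : R -> R -> R) u v :
  Xv (fun a b => (c1, c2, h a b)) u v = (0, 0, pd2 h u v).
Proof. cbv beta iota delta [Xv v1 v2 v3 pd2 fst snd]. rewrite !Derive_const. reflexivity. Qed.

Lemma timelike_graph Omega phi u v : timelike_surface Omega (graph_z phi) -> Omega u v ->
  1 - pd1 phi u v ^ 2 - pd2 phi u v ^ 2 < 0.
Proof.
  intros H Huv. destruct (H u v Huv) as [_ H2].
  unfold fE, fF, fG in H2. rewrite Xu_graph, Xv_graph in H2.
  cbv beta iota delta [ldot v1 v2 v3 fst snd] in H2. nra.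
Qed.

Lemma minimal_graph Omega phi u v : timelike_surface Omega (graph_z phi) ->
  minimal_surface Omega (graph_z phi) -> Omega u v -> PDE phi u v = 0.
Proof.
  intros Ht Hm Huv. assert (T := timelike_graph Omega phi u v Ht Huv).
  generalize (Hm u v Huv). unfold mean_curvature, fE, fF, fG, sL, sM, sN, Xuu, Xuv, Xvv, unit_normal.
  rewrite Xu_graph, Xv_graph, Xu_c, Xv_c, Xv_c.
  cbv beta iota delta [ldot lcross vscale v1 v2 v3 fst snd].
  set (p := pd1 phi u v). set (q := pd2 phi u v).
  set (k := / sqrt (Rabs _)).
  assert (Hk : k <> 0).
  { unfold k. apply Rinv_neq_0_compat. apply Rgt_not_eq. apply sqrt_lt_R0.
    apply Rabs_pos_lt. fold p q in T. intro E. nra. }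
  intros E. unfold Rdiv in E. apply Rmult_integral in E. destruct E as [E|E].
  - unfold PDE; fold p q.
    assert (E' : k * ((1 - q ^ 2) * pd1 (pd1 phi) u v + 2 * p * q * pd2 (pd1 phi) u v
       + (1 - p ^ 2) * pd2 (pd2 phi) u v) = 0).
    { rewrite <- E. ring. }
    apply Rmult_integral in E'. destruct E'; [contradiction|auto].
  - exfalso. revert E. apply Rinv_neq_0_compat. intro E. fold p q in T. nra.
Qed.

Theorem lemma2p1 (Omega : R -> R -> Prop) (phi : R -> R -> R) :
  open2 Omega ->
  smooth_on Omega phi ->
  timelike_surface Omega (graph_z phi) ->
  minimal_surface Omega (graph_z phi) ->
  forall x0 y0 : R, Omega x0 y0 ->
  exists U : R -> R -> Prop,
    open2 U /\ U x0 y0 /\ (forall x y, U x y -> Omega x y) /\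
    exists (V : R -> R -> Prop) (psi : R -> R -> R),
      open2 V /\ smooth_on V psi /\ born_infeld V psi /\
      ( (* X(U) = { (x, psi(x,z), z) | (x,z) in V } *)
        ((forall x y, U x y -> V x (phi x y) /\ psi x (phi x y) = y) /\
         (forall x z, V x z -> U x (psi x z) /\ phi x (psi x z) = z))
      \/
        (* X(U) = { (psi(y,z), y, z) | (y,z) in V } *)
        ((forall x y, U x y -> V y (phi x y) /\ psi y (phi x y) = x) /\
         (forall y z, V y z -> U (psi y z) y /\ phi (psi y z) y = z)) ).
Proof.
  intros HO Hphi Ht Hm x0 y0 H0.
  assert (HPDE : forall x y, Omega x y -> PDE phi x y = 0).
  { intros; apply minimal_graph with Omega; auto. }
  destruct (Req_dec (pd2 phi x0 y0) 0) as [Eq|Nq].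
  - assert (Np : pd1 phi x0 y0 <> 0).
    { intro E. generalize (timelike_graph Omega phi x0 y0 Ht H0). rewrite E, Eq. lra. }
    destruct (core (fun a b => Omega b a) (swap phi) (open2_swap Omega HO)
      (smooth_swap Omega phi Hphi)) with (x0 := y0) (y0 := x0)
      as [U' [HU' [HU0 [HUO [V [psi [HV [Hpsi [HBI [Alt1 Alt2]]]]]]]]]].
    + intros a b Hab.
      change (PDE (swap phi) a b) with
        ((1 - pd1 phi b a ^ 2) * pd2 (pd2 phi) b a + 2 * pd2 phi b a * pd1 phi b a * pd1 (pd2 phi) b a
         + (1 - pd2 phi b a ^ 2) * pd1 (pd1 phi) b a).
      rewrite (schwarz_smooth Omega phi b a HO Hphi Hab).
      generalize (HPDE b a Hab). unfold PDE. intro E. rewrite <- E. ring.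
    + exact H0.
    + exact Np.
    + exists (fun x y => U' y x). split; [apply open2_swap; auto|split; [exact HU0|split]].
      * intros x y Hxy. exact (HUO y x Hxy).
      * exists V, psi. split; [auto|split; [auto|split; [auto|]]].
        right. split.
        -- intros x y Hxy. exact (Alt1 y x Hxy).
        -- intros y z Hyz. exact (Alt2 y z Hyz).
  - destruct (core Omega phi HO Hphi HPDE x0 y0 H0 Nq)
      as [U [HU [HU0 [HUO [V [psi [HV [Hpsi [HBI Alt]]]]]]]]].
    exists U. repeat (split; auto). exists V, psi. repeat (split; auto).
Qed.
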